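(* In the Haechi protocol (described in the context), consider any ordering cycle of the beacon chain. The block timestamp of any in-flight CrossLink is larger than the block timestamps of all CrossLinks that are ordered in the current ordering cycle.
   Context: Setting (Haechi). A sharded blockchain has shards $S_1,\dots,S_m$; shard $S_i$ maintains a chain $SC_i=\{SC_i^1,SC_i^2,\dots\}$ of blocks, where $SC_i^h$ is the block at height $h$. Each block carries a block timestamp, fixed by the shard's intra-shard BFT consensus, and block timestamps are strictly increasing in block height within each shard. A beacon shard $S_0$ maintains a beacon chain. Transactions calling order-sensitive contracts are called OTXs. Processing phase: when shard $S_i$ handles its block at height $h$, it collects the valid new OTXs of that block, in their in-block order, into a list $L_{tx}$ and sends to the beacon chain (with a quorum certificate) a CrossLink $CL=\langle blockTS, L_{tx}, i, h\rangle$, where $blockTS$ is the block's timestamp. Ordering phase (finalization fairness algorithm): for each shard $i$ the beacon chain keeps a sequence $shardCLs[i]$ of received CrossLinks of $S_i$ with consecutive block heights; a received CrossLink whose height is exactly one more than the height of the last element of $shardCLs[i]$ is appended, together with any buffered CrossLinks of $S_i$ that then continue the consecutive sequence; a CrossLink whose height exceeds that by more than one is buffered in a pool. $shardLastTS[i]$ is the block timestamp of the last CrossLink in $shardCLs[i]$. An ordering cycle is triggered once $shardCLs[i]$ contains at least one CrossLink for every $i$; the beacon chain then selects all CrossLinks in $shardCLs$ with $blockTS\le \min_{1\le i\le m} shardLastTS[i]$, and orders their OTXs: OTXs in a CrossLink with smaller block timestamp first, and within the same CrossLink by smaller index first. This order is agreed by one instance of the beacon shard's BFT consensus and is then used by the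 contract shards to execute the transactions. An in-flight CrossLink is a CrossLink of some shard that has not yet been received by the beacon chain (its block is still being processed or the CrossLink is still in transit). *)

(* Defs.v *)
From mathcomp Require Import all_boot.
Set Implicit Arguments. Unset Strict Implicit. Unset Printing Implicit Defensive.

Section Haechi.
(* m shards S_1..S_m, indexed by 'I_m; Tx = type of OTXs. *)
Variables (m : nat) (Tx : Type).

Record CrossLink := mkCL {
  cl_blockTS : nat;
  cl_txs     : seq Tx;
  cl_shard   : 'I_m;
  cl_height  : nat }.

(* The shard chains: ts i h = timestamp of block SC_i^h (heights h >= 1),
   txs i h = valid new OTXs of that block, in in-block order. *)
Variables (ts : 'I_m -> nat -> nat) (txs : 'I_m -> nat -> seq Tx).

Definition genCL (i : 'I_m) (h : nat) : CrossLink := mkCL (ts i h) (txs i h) i h.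

(* Beacon-chain state: lastH i = height of the last CrossLink ever appended to
   shardCLs[i] (0 initially), shardCLs, and the buffer pool. *)
Record BState := mkBS {
  lastH    : 'I_m -> nat;
  shardCLs : 'I_m -> seq CrossLink;
  pool     : seq CrossLink }.

Definition init_state : BState := mkBS (fun _ => 0) (fun _ => [::]) [::].

Definition append_cl (s : BState) (cl : CrossLink) : BState :=
  let i := cl_shard cl in
  mkBS (fun j => if j == i then cl_height cl else lastH s j)
       (fun j => if j == i then rcons (shardCLs s j) cl else shardCLs s j)
       [seq c <- pool s | ~~ ((cl_shard c == i) && (cl_height c == cl_height cl))].

Fixpoint drain (n : nat) (i : 'I_m) (s : BState) : BState :=
  match n with
  | 0 => s
  | n'.+1 =>
    match ohead [seq c <- pool s | (cl_shard c == i) && (cl_height c == (lastH s i).+1)] with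
    | Some c => drain n' i (append_cl s c)
    | None => s
    end
  end.

Definition receive (s : BState) (cl : CrossLink) : BState :=
  let i := cl_shard cl in
  if cl_height cl == (lastH s i).+1 then
    let s' := append_cl s cl in drain (size (pool s')) i s'
  else if (lastH s i).+1 < cl_height cl then
    mkBS (lastH s) (shardCLs s) (rcons (pool s) cl)
  else s.

Definition shardLastTS (s : BState) (i : 'I_m) : nat :=
  last 0 (map cl_blockTS (shardCLs s i)).

Definition triggered (s : BState) : bool := [forall i, ~~ nilp (shardCLs s i)].

Definition selectedb (s : BState) (c : CrossLink) : bool :=
  [forall i, cl_blockTS c <= shardLastTS s i].

Definition orderedCLs (s : BState) : seq CrossLink :=
  flatten [seq [seq c <- shardCLs s i | selectedb s c] | i <- enum 'I_m].

Definition after_cycle (s : BState) : BState :=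
  mkBS (lastH s) (fun i => [seq c <- shardCLs s i | ~~ selectedb s c]) (pool s).

Inductive event :=
| Recv of 'I_m & nat   (* beacon chain receives the CrossLink of S_i at height h *)
| Cycle.

Definition step (s : BState) (e : event) : BState :=
  match e with
  | Recv i h => receive s (genCL i h)
  | Cycle => if triggered s then after_cycle s else s
  end.

Definition run (ev : seq event) : BState := foldl step init_state ev.

End Haechi.

(* Main.v *)
Require Import Defs.
From mathcomp Require Import all_boot.
From Stdlib Require List.

Lemma In_rcons (T : Type) (l : seq T) x y :
  List.In x (rcons l y) <-> List.In x l \/ x = y.
Proof.
elim: l => [|a l IH] /=; first by split; [case=> // ->; right | case=> // ->; left].
split.
- case=> [->|/IH [H|H]]; [left; left | left; right | right] => //.
- case=> [[->|H]|H]; [left | right; apply/IH; left | right; apply/IH; right] => //.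
Qed.

Lemma In_filter (T : Type) (p : pred T) (l : seq T) x :
  List.In x (filter p l) <-> List.In x l /\ p x.
Proof.
elim: l => [|a l IH] /=; first by split => // [[]].
case: ifP => pa /=.
- split; first by case=> [<-|/IH [H1 H2]]; split => //; [left | right].
  by case=> [[<-|H] px]; [left | right; apply/IH].
- split; first by move/IH => [H1 H2]; split => //; right.
  by case=> [[<-|H] px]; [rewrite px in pa | apply/IH].
Qed.

Lemma In_cat (T : Type) (l1 l2 : seq T) x :
  List.In x (l1 ++ l2) -> List.In x l1 \/ List.In x l2.
Proof.
elim: l1 => [|a l IH] /=; first by right.
by case=> [->|/IH [H|H]]; [left; left | left; right | right].
Qed.

Lemma ohead_filter (T : Type) (p : pred T) (l : seq T) c :
  ohead (filter p l) = Some c -> List.In c l /\ p c.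
Proof.
elim: l => [|a l IH] //=.
case: ifP => pa /=; first by case=> <-; split => //; left.
by move/IH => [H1 H2]; split => //; right.
Qed.

Arguments In_rcons {T l x y}.
Arguments In_filter {T p l x}.
Arguments In_cat {T l1 l2 x}.
Arguments ohead_filter {T p l c}.

Lemma filter_none (T : Type) (p : pred T) (l : seq T) :
  (forall c, List.In c l -> p c = false) -> filter p l = [::].
Proof.
elim: l => [|a l IH] H //=.
by rewrite H /=; [apply: IH => c Hc; apply: H; right | left].
Qed.

Section Proof.
Variables (m : nat) (Tx : Type).
Variables (ts : 'I_m -> nat -> nat) (txs : 'I_m -> nat -> seq Tx).
Hypothesis ts_incr : forall (i : 'I_m) (h h' : nat), 0 < h -> h < h' -> ts i h < ts i h'.

Definition Inv (s : BState m Tx) (ev : seq (event m)) :=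
 [/\ (forall j c, List.In c (shardCLs s j) -> cl_blockTS c <= ts j (lastH s j) /\ 0 < lastH s j),
     (forall j, shardCLs s j = [::] \/ exists l, shardCLs s j = rcons l (genCL ts txs j (lastH s j))),
     (forall c, List.In c (pool s) -> c = genCL ts txs (cl_shard c) (cl_height c) /\
                  List.In (Recv (cl_shard c) (cl_height c)) ev) &
     (forall j h, 0 < h -> h <= lastH s j -> List.In (Recv j h) ev)].

Lemma Inv_mono s ev ev' : (forall e, List.In e ev -> List.In e ev') -> Inv s ev -> Inv s ev'.
Proof.
move=> Hi [A B C D]; split => //.
- by move=> c /C [H1 H2]; split => //; apply: Hi.
- by move=> j h H1 H2; apply: Hi; apply: D.
Qed.

Lemma Inv_append s ev c :
  Inv s ev -> c = genCL ts txs (cl_shard c) (cl_height c) ->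
  List.In (Recv (cl_shard c) (cl_height c)) ev ->
  cl_height c = (lastH s (cl_shard c)).+1 ->
  Inv (append_cl s c) ev.
Proof.
case: c => t0 x0 i0 h0 [A B C D] /= Hc Hr Hh.
case: Hc => -> -> {t0 x0}; rewrite /append_cl /=; split => /=.
- move=> j x; case: eqP => [->|_]; last exact: A.
  case/In_rcons => [Hx|->].
  + have [H1 H2] := A _ _ Hx; split; last by rewrite Hh.
    rewrite Hh; apply: ltnW; apply: (leq_ltn_trans H1); exact: ts_incr.
  + by rewrite /= Hh.
- move=> j; case: eqP => [->|_]; last exact: B.
  by right; exists (shardCLs s i0).
- by move=> x /In_filter [/C H _].
- move=> j h hh0; case: eqP => [->|_]; last exact: D.
  rewrite leq_eqVlt; case/orP => [/eqP ->|] //.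
  by rewrite Hh ltnS; apply: D.
Qed.

Lemma Inv_drain n i s ev : Inv s ev -> Inv (drain n i s) ev.
Proof.
elim: n s => [|n IH] s Hs //=.
case E: ohead => [c|] //; apply: IH.
have [Hin /andP [/eqP Hsh /eqP Hh]] := ohead_filter E.
have [_ _ C _] := Hs; have [Hc Hr] := C _ Hin.
by apply: Inv_append => //; rewrite Hsh.
Qed.

Lemma Inv_receive s ev i h :
  Inv s ev -> List.In (Recv i h) ev -> Inv (receive s (genCL ts txs i h)) ev.
Proof.
move=> Hs Hr; rewrite /receive /=.
case: eqP => [Hh|_].
  by apply: Inv_drain; apply: Inv_append.
case: ifP => // _.
have [A B C D] := Hs; split => //= c /In_rcons [/C //|->] //.
Qed.

Lemma Inv_cycle s ev : Inv s ev -> Inv (if triggered s then after_cycle s else s) ev.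
Proof.
case: ifP => // _ [A B C D]; rewrite /after_cycle; split => //=.
- by move=> j c /In_filter [/A H _].
- move=> j; case: (B j) => [->|[l Hl]]; first by left.
  rewrite Hl filter_rcons.
  case: ifP => Hsel; first by right; exists [seq c <- l | ~~ selectedb s c].
  left; apply: filter_none => c Hc.
  move/negbFE: Hsel => Hsel; apply/negbF.
  apply/forallP => k; move/forallP: Hsel => /(_ k) /=.
  apply: leq_trans.
  by have [] := A j c; [rewrite Hl; apply/In_rcons; left|].
Qed.

Lemma Inv_run ev : Inv (run ts txs ev) ev.
Proof.
elim/last_ind: ev => [|ev e IH].
  split => //= [j|j h h0]; first by left.
  by rewrite leqn0 => /eqP Eh; rewrite Eh in h0.
have Hm : forall x, List.In x ev -> List.In x (rcons ev e).
  by move=> x Hx; apply/In_rcons; left.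
rewrite /run foldl_rcons -/(run ts txs ev).
have IH' := @Inv_mono _ _ _ Hm IH.
clear Hm; case: e IH' => [i h|] IH' /=; last exact: Inv_cycle.
by apply: Inv_receive => //; apply/In_rcons; right.
Qed.

End Proof.

Lemma flatten_sel m Tx (s : BState m Tx) (r : seq 'I_m) c :
  List.In c (flatten [seq [seq c <- shardCLs s i | selectedb s c] | i <- r]) -> selectedb s c.
Proof.
elim: r => [|a r IH] //= /In_cat [/In_filter [_ H]|/IH] //.
Qed.


Theorem lemma1 (m : nat) (Tx : Type)
  (ts : 'I_m -> nat -> nat) (txs : 'I_m -> nat -> seq Tx)
  (ts_incr : forall (i : 'I_m) (h h' : nat), 0 < h -> h < h' -> ts i h < ts i h')
  (ev : seq (event m)) :
  let s := run ts txs ev in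
  triggered s ->
  forall c : CrossLink m Tx, List.In c (orderedCLs s) ->
  forall (j : 'I_m) (h : nat), 0 < h -> ~ List.In (Recv j h) ev ->
  cl_blockTS c < cl_blockTS (genCL ts txs j h).
Proof.
move=> s Htr c Hc j h h0 Hnr.
have Hsel := @flatten_sel _ _ s (enum 'I_m) c Hc.
have [A B C D] := @Inv_run m Tx ts txs ts_incr ev.
rewrite -/s in A B C D.
have Hne : shardCLs s j <> [::].
  move: Htr; rewrite /triggered => /forallP /(_ j) /negP Hn Ee; apply: Hn; by rewrite Ee.
case: (B j) => [//|[l Hl]].
have [_ Hpos] := A j (genCL ts txs j (lastH s j)) ltac:(rewrite Hl; apply/In_rcons; right; reflexivity).
have HL : lastH s j < h.
  rewrite ltnNge; apply/negP => Hle; apply: Hnr; exact: D.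
move/forallP: Hsel => /(_ j).
rewrite /shardLastTS Hl map_rcons last_rcons /= => Hle.
apply: (leq_ltn_trans Hle); exact: ts_incr.
Qed.
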